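(* Let $a>1$ and let $f$ be a continuous and bounded real function on $X=[0,\infty)\times[0,\infty)$. For all $m,n\in\mathbb{N}$ and $(x,y)\in X$, \[ |\hat{Y}_{m,n,a}(f;x,y)-f(x,y)|\leq 2\,\omega(f;\delta_{m,n}), \qquad |\hat{Y}_{m,n,a}(f;x,y)-f(x,y)|\leq 2\{\omega_1(f,\delta_m)+\omega_2(f,\delta_n)\}, \] where \[ \delta_m=\sqrt{\frac{x\left(m^2x(a^{1/m}-1)^2-(a^{1/m}-1)\log a\,(2mx-1)+x(\log a)^2\right)}{m^2(a^{1/m}-1)^2}}, \] \[ \delta_n=\sqrt{\frac{y\left(n^2y(a^{1/n}-1)^2-(a^{1/n}-1)\log a\,(2ny-1)+y(\log a)^2\right)}{n^2(a^{1/n}-1)^2}}, \] and $\delta_{m,n}=\sqrt{\delta_m^2+\delta_n^2}$.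
   Context: For $m,n\in\mathbb{N}$, $(x,y)\in X$ and integers $k_1,k_2\ge0$ let \[ s_{m,n,k_1,k_2}^a(x,y)=a^{-\frac{x}{a^{1/m}-1}}\,a^{-\frac{y}{a^{1/n}-1}}\,\frac{x^{k_1}y^{k_2}(\log a)^{k_1+k_2}}{(a^{1/m}-1)^{k_1}(a^{1/n}-1)^{k_2}\,k_1!\,k_2!}, \] \[ \hat{Y}_{m,n,a}(f;x,y)=\sum_{k_1=0}^{\infty}\sum_{k_2=0}^{\infty}s_{m,n,k_1,k_2}^a(x,y)\,f\!\left(\tfrac{k_1}{m},\tfrac{k_2}{n}\right). \] (The quantities $\delta_m^2,\delta_n^2$ are $\hat{Y}_{m,n,a}((t-x)^2;x,y)$ and $\hat{Y}_{m,n,a}((s-y)^2;x,y)$.) The total modulus of continuity is $\omega(f,\delta)=\sup\{|f(t,s)-f(x,y)|:(t,s),(x,y)\in X,\ \sqrt{(t-x)^2+(s-y)^2}\le\delta\}$; the partial moduli are $\omega_1(f,\delta)=\sup\{|f(u_1,y)-f(u_2,y)|:u_1,u_2,y\ge0,\ |u_1-u_2|\le\delta\}$ and $\omega_2(f,\delta)=\sup\{|f(x,v_1)-f(x,v_2)|:x,v_1,v_2\ge0,\ |v_1-v_2|\le\delta\}$. *)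

(* Defs.v *)
From Stdlib Require Import Reals Factorial.
From Coquelicot Require Import Coquelicot.
Open Scope R_scope.

Definition inX (x y : R) : Prop := 0 <= x /\ 0 <= y.

Definition continuous_on_X (f : R -> R -> R) : Prop :=
  forall x y, inX x y -> forall eps, 0 < eps -> exists del, 0 < del /\
    forall t s, inX t s -> sqrt ((t - x)^2 + (s - y)^2) < del ->
      Rabs (f t s - f x y) < eps.

Definition bounded_on_X (f : R -> R -> R) : Prop :=
  exists M, forall x y, inX x y -> Rabs (f x y) <= M.

Definition aroot (a : R) (m : nat) : R := Rpower a (/ INR m).

Definition s_kernel (a : R) (m n k1 k2 : nat) (x y : R) : R :=
  Rpower a (- (x / (aroot a m - 1))) * Rpower a (- (y / (aroot a n - 1))) *
  (x ^ k1 * y ^ k2 * (ln a) ^ (k1 + k2) /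
   ((aroot a m - 1) ^ k1 * (aroot a n - 1) ^ k2 * INR (Factorial.fact k1) * INR (Factorial.fact k2))).

Definition Yhat (a : R) (m n : nat) (f : R -> R -> R) (x y : R) : R :=
  Series (fun k1 => Series (fun k2 =>
    s_kernel a m n k1 k2 x y * f (INR k1 / INR m) (INR k2 / INR n))).

(* total modulus of continuity (sup over X; finite for bounded f) *)
Definition omega (f : R -> R -> R) (d : R) : R :=
  real (Lub_Rbar (fun r => exists t s x y, inX t s /\ inX x y /\
     sqrt ((t - x)^2 + (s - y)^2) <= d /\ r = Rabs (f t s - f x y))).

Definition omega1 (f : R -> R -> R) (d : R) : R :=
  real (Lub_Rbar (fun r => exists u1 u2 y, 0 <= u1 /\ 0 <= u2 /\ 0 <= y /\
     Rabs (u1 - u2) <= d /\ r = Rabs (f u1 y - f u2 y))).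

Definition omega2 (f : R -> R -> R) (d : R) : R :=
  real (Lub_Rbar (fun r => exists x v1 v2, 0 <= x /\ 0 <= v1 /\ 0 <= v2 /\
     Rabs (v1 - v2) <= d /\ r = Rabs (f x v1 - f x v2))).

Definition delta (a : R) (m : nat) (x : R) : R :=
  sqrt (x * (INR m ^ 2 * x * (aroot a m - 1) ^ 2
             - (aroot a m - 1) * ln a * (2 * INR m * x - 1)
             + x * (ln a) ^ 2)
        / (INR m ^ 2 * (aroot a m - 1) ^ 2)).

Definition delta2 (a : R) (m n : nat) (x y : R) : R :=
  sqrt (delta a m x ^ 2 + delta a n y ^ 2).

(* Main.v *)
Require Import Defs.
From Stdlib Require Import Reals.
From Coquelicot Require Import Coquelicot.
Open Scope R_scope.
From Stdlib Require Import Lra Lia.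

Definition ek (u : R) (k : nat) : R := u ^ k / INR (Factorial.fact k).

Lemma is_series_eq (a b : nat -> R) l l' : (forall n, a n = b n) -> l = l' -> is_series a l -> is_series b l'.
Proof. intros H <-. apply is_series_ext; auto. Qed.

Lemma e_series u : is_series (ek u) (exp u).
Proof.
  pose proof (is_exp_Reals u) as H. apply is_pseries_R in H.
  eapply is_series_eq; [| |exact H]; [|reflexivity]. intros k. unfold ek. unfold Rdiv. ring.
Qed.

Lemma ekS u k : INR (S k) * ek u (S k) = u * ek u k.
Proof.
  unfold ek. rewrite fact_simpl, mult_INR. simpl pow.
  pose proof (INR_fact_neq_0 k). assert (INR (S k) <> 0) by apply not_0_INR, Nat.neq_succ_0.
  field. auto.
Qed.

Lemma k_series u : is_series (fun k => INR k * ek u k) (u * exp u).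
Proof.
  apply is_series_decr_1.
  eapply is_series_eq; [| |apply (is_series_scal u _ _ (e_series u))].
  - intros k. cbv beta. change (scal u (ek u k)) with (u * ek u k). rewrite <- ekS. reflexivity.
  - change (u * exp u = u * exp u + - (INR 0 * ek u 0)). simpl. ring.
Qed.

Lemma kk_series u : is_series (fun k => INR k * (INR k - 1) * ek u k) (u * u * exp u).
Proof.
  apply is_series_decr_1.
  eapply is_series_eq; [| |apply (is_series_scal u _ _ (k_series u))].
  - intros k. cbv beta. change (scal u (INR k * ek u k)) with (u * (INR k * ek u k)).
    replace (INR (S k) * (INR (S k) - 1) * ek u (S k)) with (INR k * (INR (S k) * ek u (S k))).
    rewrite ekS. ring. rewrite S_INR. ring.
  - change (u * (u * exp u) = u * u * exp u + - (INR 0 * (INR 0 - 1) * ek u 0)). simpl. ring.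
Qed.

Definition pw (u : R) (k : nat) : R := exp (- u) * ek u k.

Lemma pw_series u : is_series (pw u) 1.
Proof.
  eapply is_series_eq; [| |apply (is_series_scal (exp (-u)) _ _ (e_series u))].
  - reflexivity.
  - change (exp (-u) * exp u = 1). rewrite exp_Ropp. field. apply Rgt_not_eq, exp_pos.
Qed.

Lemma pw_ge0 u k : 0 <= u -> 0 <= pw u k.
Proof.
  intros Hu. unfold pw, ek. apply Rmult_le_pos. left; apply exp_pos.
  apply Rmult_le_pos. apply pow_le; auto. left; apply Rinv_0_lt_compat, INR_fact_lt_0.
Qed.

Lemma pw_moment u (m : R) x : m <> 0 ->
  is_series (fun k => pw u k * (INR k / m - x) ^ 2)
     ((u / m - x) ^ 2 + u / m ^ 2).
Proof.
  intros Hm.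
  pose proof (kk_series u) as H1. pose proof (k_series u) as H2. pose proof (e_series u) as H3.
  pose proof (is_series_plus _ _ _ _ (is_series_plus _ _ _ _ H1 H2)
     (is_series_plus _ _ _ _ (is_series_scal (-2 * x * m) _ _ H2) (is_series_scal (x*x*m*m) _ _ H3))) as H.
  pose proof (is_series_scal (exp (-u) / (m * m)) _ _ H) as H'.
  eapply is_series_eq; [| |exact H'].
  - intros k. cbv beta. unfold pw. repeat change (scal ?a ?b) with (a * b); repeat change (plus ?a ?b) with (a + b).
    field. auto.
  - repeat change (scal ?a ?b) with (a * b); repeat change (plus ?a ?b) with (a + b).
    assert (exp u <> 0) by apply Rgt_not_eq, exp_pos. rewrite exp_Ropp. match goal with |- ?a = ?b => change (@eq R a b) end. field. auto.
Qed.

Lemma pw_zero k : pw 0 k <> 0 -> k = 0%nat.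
Proof.
  destruct k; auto. intros H. exfalso. apply H. unfold pw, ek. rewrite pow_i. unfold Rdiv. ring. apply Nat.lt_0_succ.
Qed.



Ltac rR := cbv beta; repeat change (scal ?a ?b) with (a * b); repeat change (plus ?a ?b) with (a + b);
  repeat change (opp ?a) with (- a);
  try match goal with |- ?a = ?b => change (@eq R a b) end.

Lemma series_abs_le (a b : nat -> R) la lb : (forall k, Rabs (a k) <= b k) ->
  is_series a la -> is_series b lb -> Rabs la <= lb.
Proof.
  intros Hab Ha Hb.
  assert (E1 : is_series (fun k => a k + b k) (la + lb)) by exact (is_series_plus _ _ _ _ Ha Hb).
  assert (E2 : is_series (fun k => b k - a k) (lb - la)) by exact (is_series_minus _ _ _ _ Hb Ha).
  assert (E3 : is_series (fun k => 2 * b k) (2 * lb)) by exact (is_series_scal 2 _ _ Hb).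
  assert (L1 : Series (fun k => a k + b k) <= Series (fun k => 2 * b k)).
  { apply Series_le. intros k. pose proof (Hab k). apply Rabs_le_between in H. lra. eexists; eauto. }
  assert (L2 : Series (fun k => b k - a k) <= Series (fun k => 2 * b k)).
  { apply Series_le. intros k. pose proof (Hab k). apply Rabs_le_between in H. lra. eexists; eauto. }
  rewrite (is_series_unique _ _ E1), (is_series_unique _ _ E3) in L1.
  rewrite (is_series_unique _ _ E2), (is_series_unique _ _ E3) in L2.
  apply Rabs_le. lra.
Qed.

Lemma double_bound (p q : nat -> R) (F : nat -> nat -> R) (T S : nat -> R) (x y f0 A C1 C2 D1 D2 M : R) :
  (forall k, 0 <= p k) -> (forall k, 0 <= q k) -> is_series p 1 -> is_series q 1 ->
  is_series (fun k => p k * (T k - x)^2) D1 -> is_series (fun k => q k * (S k - y)^2) D2 ->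
  (forall k1 k2, Rabs (F k1 k2) <= M) ->
  (forall k1 k2, p k1 <> 0 -> q k2 <> 0 ->
     Rabs (F k1 k2 - f0) <= A + C1 * (T k1 - x)^2 + C2 * (S k2 - y)^2) ->
  Rabs (Series (fun k1 => p k1 * Series (fun k2 => q k2 * F k1 k2)) - f0) <= A + C1 * D1 + C2 * D2.
Proof.
  intros Hp Hq Sp Sq SD1 SD2 HM HF.
  set (G k1 := Series (fun k2 => q k2 * F k1 k2)).
  assert (SMq : is_series (fun k => q k * M) M).
  { eapply is_series_eq; [| |exact (is_series_scal M _ _ Sq)]; intros; rR; ring. }
  assert (SMp : is_series (fun k => p k * M) M).
  { eapply is_series_eq; [| |exact (is_series_scal M _ _ Sp)]; intros; rR; ring. }
  assert (HG : forall k1, is_series (fun k2 => q k2 * F k1 k2) (G k1)).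
  { intros k1. apply Series_correct. eapply (@ex_series_le R_AbsRing R_CompleteNormedModule); [|eexists; exact SMq].
    intros k. change (norm ?z) with (Rabs z). cbv beta. rewrite Rabs_mult, (Rabs_pos_eq (q k)) by auto.
    apply Rmult_le_compat_l; auto. }
  assert (HGb : forall k1, Rabs (G k1) <= M).
  { intros k1. eapply series_abs_le; [|exact (HG k1)|exact SMq].
    intros k. cbv beta. rewrite Rabs_mult, (Rabs_pos_eq (q k)) by auto. apply Rmult_le_compat_l; auto. }
  assert (Hin : forall k1, p k1 <> 0 -> Rabs (G k1 - f0) <= A + C1 * (T k1 - x)^2 + C2 * D2).
  { intros k1 Hpk.
    eapply series_abs_le with (a := fun k2 => q k2 * F k1 k2 - f0 * q k2)
      (b := fun k2 => q k2 * (A + C1 * (T k1 - x)^2) + C2 * (q k2 * (S k2 - y)^2)).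
    - intros k2. destruct (Req_dec (q k2) 0) as [E|E].
      + rewrite E. rewrite Rmult_0_l, Rmult_0_l, Rmult_0_r, Rmult_0_l, Rmult_0_r, Rminus_0_r, Rabs_R0. lra.
      + replace (q k2 * F k1 k2 - f0 * q k2) with (q k2 * (F k1 k2 - f0)) by ring.
        rewrite Rabs_mult, (Rabs_pos_eq (q k2)) by auto.
        pose proof (HF k1 k2 Hpk E). pose proof (Hq k2).
        replace (q k2 * (A + C1 * (T k1 - x) ^ 2) + C2 * (q k2 * (S k2 - y) ^ 2))
          with (q k2 * (A + C1 * (T k1 - x) ^ 2 + C2 * (S k2 - y) ^ 2)) by ring.
        apply Rmult_le_compat_l; auto.
    - eapply is_series_eq; [| |exact (is_series_minus _ _ _ _ (HG k1) (is_series_scal f0 _ _ Sq))];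
        intros; rR; ring.
    - eapply is_series_eq; [| |exact (is_series_plus _ _ _ _ (is_series_scal (A + C1 * (T k1 - x)^2) _ _ Sq) (is_series_scal C2 _ _ SD2))];
        intros; rR; ring. }
  assert (HY : is_series (fun k1 => p k1 * G k1) (Series (fun k1 => p k1 * G k1))).
  { apply Series_correct. eapply (@ex_series_le R_AbsRing R_CompleteNormedModule); [|eexists; exact SMp].
    intros k. change (norm ?z) with (Rabs z). cbv beta. rewrite Rabs_mult, (Rabs_pos_eq (p k)) by auto.
    apply Rmult_le_compat_l; auto. }
  eapply series_abs_le with (a := fun k1 => p k1 * G k1 - f0 * p k1)
      (b := fun k1 => p k1 * (A + C2 * D2) + C1 * (p k1 * (T k1 - x)^2)).
  - intros k1. destruct (Req_dec (p k1) 0) as [E|E].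
    + rewrite E. rewrite Rmult_0_l, Rmult_0_l, Rmult_0_r, Rmult_0_l, Rmult_0_r, Rminus_0_r, Rabs_R0. lra.
    + replace (p k1 * G k1 - f0 * p k1) with (p k1 * (G k1 - f0)) by ring.
      rewrite Rabs_mult, (Rabs_pos_eq (p k1)) by auto.
      pose proof (Hin k1 E). pose proof (Hp k1).
      replace (p k1 * (A + C2 * D2) + C1 * (p k1 * (T k1 - x) ^ 2))
        with (p k1 * (A + C1 * (T k1 - x) ^ 2 + C2 * D2)) by ring.
      apply Rmult_le_compat_l; auto.
  - eapply is_series_eq; [| |exact (is_series_minus _ _ _ _ HY (is_series_scal f0 _ _ Sp))];
      intros; rR; unfold G; ring.
  - eapply is_series_eq; [| |exact (is_series_plus _ _ _ _ (is_series_scal (A + C2 * D2) _ _ Sp) (is_series_scal C1 _ _ SD1))];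
      intros; rR; ring.
Qed.

Lemma lub_le (E : R -> Prop) B r0 : (forall r, E r -> r <= B) -> E r0 -> r0 <= real (Lub_Rbar E).
Proof.
  intros HB H0. destruct (Lub_Rbar_correct E) as [Hub Hl].
  specialize (Hub r0 H0). specialize (Hl (Finite B) HB).
  destruct (Lub_Rbar E); simpl in *; auto; contradiction.
Qed.

Lemma chain (g : R -> R) (W : R) (N : nat) :
  (forall t t', 0 <= t <= 1 -> 0 <= t' <= 1 -> Rabs (t - t') <= / INR (S N) -> Rabs (g t - g t') <= W) ->
  Rabs (g 0 - g 1) <= INR (S N) * W.
Proof.
  intros H. set (K := INR (S N)).
  assert (HK : 0 < K) by (apply lt_0_INR; lia).
  assert (A : forall j, (j <= S N)%nat -> Rabs (g 0 - g (INR j / K)) <= INR j * W).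
  { induction j as [|j IH]; intros Hj.
    - simpl. replace (0 / K) with 0 by (unfold Rdiv; ring). unfold Rminus. rewrite Rplus_opp_r, Rabs_R0. lra.
    - assert (Hj' : (j <= S N)%nat) by lia. specialize (IH Hj').
      assert (Hle : INR (S j) <= K) by (apply le_INR; auto).
      assert (Hle' : INR j <= K) by (apply le_INR; auto).
      pose proof (pos_INR j).
      assert (B : Rabs (g (INR j / K) - g (INR (S j) / K)) <= W).
      { apply H.
        - split. apply Rmult_le_pos; [lra|left; apply Rinv_0_lt_compat; lra].
          unfold Rdiv. apply (Rmult_le_reg_r K); auto. rewrite Rmult_assoc, Rinv_l; lra.
        - split. apply Rmult_le_pos; [apply pos_INR|left; apply Rinv_0_lt_compat; lra].
          unfold Rdiv. apply (Rmult_le_reg_r K); auto. rewrite Rmult_assoc, Rinv_l; lra.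
        - rewrite S_INR. replace (INR j / K - (INR j + 1) / K) with (- / K) by (field; lra).
          rewrite Rabs_Ropp, Rabs_pos_eq. apply Rle_refl. left; apply Rinv_0_lt_compat; lra. }
      replace (g 0 - g (INR (S j) / K)) with ((g 0 - g (INR j / K)) + (g (INR j / K) - g (INR (S j) / K))) by ring.
      eapply Rle_trans. apply Rabs_triang. replace (INR (S j) * W) with (INR j * W + W) by (rewrite S_INR; ring). lra. }
  specialize (A (S N) (le_n _)). fold K in A. replace (K / K) with 1 in A by (field; lra). exact A.
Qed.

Lemma lam_bound (Dl D d W : R) : 0 <= D -> 0 < d -> 0 <= W ->
  (forall N : nat, D <= INR (S N) * d -> Dl <= INR (S N) * W) -> Dl <= W + W / d ^ 2 * D ^ 2.
Proof.
  intros HD Hd HW H.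
  assert (Hl : 0 <= D / d) by (apply Rmult_le_pos; [lra|left; apply Rinv_0_lt_compat; lra]).
  destruct (nfloor_ex (D / d) Hl) as [n [H1 H2]].
  assert (E : D <= INR (S n) * d).
  { rewrite S_INR. apply (Rmult_le_reg_r (/ d)). apply Rinv_0_lt_compat; lra.
    rewrite Rmult_assoc, Rinv_r by lra. fold (D / d). lra. }
  specialize (H n E).
  replace (W / d ^ 2 * D ^ 2) with (W * (D / d) ^ 2) by (field; lra).
  assert (Hn : INR n <= (D / d) ^ 2).
  { destruct n. simpl. nra. assert (1 <= INR (S n)) by (apply (le_INR 1); lia). nra. }
  rewrite S_INR in H. nra.
Qed.

Section Om.
Variable f : R -> R -> R.
Variable M : R.
Hypothesis HM : forall x y, inX x y -> Rabs (f x y) <= M.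

Lemma diff_le t s x y : inX t s -> inX x y -> Rabs (f t s - f x y) <= 2 * M.
Proof.
  intros H1 H2. unfold Rminus. eapply Rle_trans. apply Rabs_triang. rewrite Rabs_Ropp.
  pose proof (HM _ _ H1). pose proof (HM _ _ H2). lra.
Qed.

Lemma omega_ub d t s x y : inX t s -> inX x y -> sqrt ((t - x)^2 + (s - y)^2) <= d ->
  Rabs (f t s - f x y) <= omega f d.
Proof.
  intros H1 H2 H3. unfold omega. apply lub_le with (2 * M).
  - intros r (t' & s' & x' & y' & A1 & A2 & _ & ->). apply diff_le; auto.
  - exists t, s, x, y. auto.
Qed.

Lemma omega1_ub d u1 u2 y : 0 <= u1 -> 0 <= u2 -> 0 <= y -> Rabs (u1 - u2) <= d ->
  Rabs (f u1 y - f u2 y) <= omega1 f d.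
Proof.
  intros H1 H2 H3 H4. unfold omega1. apply lub_le with (2 * M).
  - intros r (a & b & c & A1 & A2 & A3 & _ & ->). apply diff_le; split; auto.
  - exists u1, u2, y. auto.
Qed.

Lemma omega2_ub d x v1 v2 : 0 <= x -> 0 <= v1 -> 0 <= v2 -> Rabs (v1 - v2) <= d ->
  Rabs (f x v1 - f x v2) <= omega2 f d.
Proof.
  intros H1 H2 H3 H4. unfold omega2. apply lub_le with (2 * M).
  - intros r (a & b & c & A1 & A2 & A3 & _ & ->). apply diff_le; split; auto.
  - exists x, v1, v2. auto.
Qed.

Lemma omega_ge0 d : 0 <= d -> 0 <= omega f d.
Proof.
  intros Hd. eapply Rle_trans; [|apply (omega_ub d 0 0 0 0)].
  apply Rabs_pos. split; lra. split; lra.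
  replace ((0 - 0) ^ 2 + (0 - 0) ^ 2) with 0 by ring. rewrite sqrt_0; auto.
Qed.

Lemma omega1_ge0 d : 0 <= d -> 0 <= omega1 f d.
Proof.
  intros Hd. eapply Rle_trans; [|apply (omega1_ub d 0 0 0)]; try lra.
  apply Rabs_pos. rewrite Rminus_0_r, Rabs_R0; auto.
Qed.

Lemma omega2_ge0 d : 0 <= d -> 0 <= omega2 f d.
Proof.
  intros Hd. eapply Rle_trans; [|apply (omega2_ub d 0 0 0)]; try lra.
  apply Rabs_pos. rewrite Rminus_0_r, Rabs_R0; auto.
Qed.

Lemma seg_dist (tau tau' D d : R) (N : nat) : 0 <= D -> D <= INR (S N) * d ->
  Rabs (tau - tau') <= / INR (S N) -> Rabs (tau - tau') * D <= d.
Proof.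
  intros HD H1 H2. assert (HK : 0 < INR (S N)) by (apply lt_0_INR; lia).
  apply Rle_trans with (/ INR (S N) * D). apply Rmult_le_compat_r; auto.
  apply (Rmult_le_reg_l (INR (S N))); auto. rewrite <- Rmult_assoc, Rinv_r; lra.
Qed.

Lemma omega_lam d t s x y : 0 < d -> inX t s -> inX x y ->
  Rabs (f t s - f x y) <= omega f d + omega f d / d ^ 2 * ((t - x)^2 + (s - y)^2).
Proof.
  intros Hd [Ht Hs] [Hx Hy].
  set (D := sqrt ((t - x)^2 + (s - y)^2)).
  assert (HD2 : D ^ 2 = (t - x)^2 + (s - y)^2) by (apply pow2_sqrt; apply Rplus_le_le_0_compat; apply pow2_ge_0).
  rewrite <- HD2. apply lam_bound; [apply sqrt_pos|auto|apply omega_ge0; lra|].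
  intros N HN.
  set (g tau := f (t + tau * (x - t)) (s + tau * (y - s))).
  assert (G0 : g 0 = f t s) by (unfold g; f_equal; ring).
  assert (G1 : g 1 = f x y) by (unfold g; f_equal; ring).
  rewrite <- G0, <- G1. apply chain.
  intros tau tau' [H1 H2] [H3 H4] H5. unfold g. apply omega_ub.
  - split; nra.
  - split; nra.
  - replace ((t + tau * (x - t) - (t + tau' * (x - t))) ^ 2 + (s + tau * (y - s) - (s + tau' * (y - s))) ^ 2)
      with (Rabs (tau - tau') ^ 2 * ((t - x)^2 + (s - y)^2)) by (rewrite pow2_abs; ring).
    rewrite sqrt_mult, sqrt_pow2; try apply Rabs_pos; try nra.
    apply (seg_dist _ _ D d N); auto. apply sqrt_pos.
Qed.

Lemma omega1_lam d t s x : 0 < d -> 0 <= t -> 0 <= x -> 0 <= s ->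
  Rabs (f t s - f x s) <= omega1 f d + omega1 f d / d ^ 2 * (t - x)^2.
Proof.
  intros Hd Ht Hx Hs.
  rewrite <- (pow2_abs (t - x)). apply lam_bound; [apply Rabs_pos|auto|apply omega1_ge0; lra|].
  intros N HN.
  set (g tau := f (t + tau * (x - t)) s).
  assert (G0 : g 0 = f t s) by (unfold g; f_equal; ring).
  assert (G1 : g 1 = f x s) by (unfold g; f_equal; ring).
  rewrite <- G0, <- G1. apply chain.
  intros tau tau' [H1 H2] [H3 H4] H5. unfold g. apply omega1_ub; try nra.
  replace (t + tau * (x - t) - (t + tau' * (x - t))) with ((tau - tau') * (x - t)) by ring.
  rewrite Rabs_mult, (Rabs_minus_sym x t).
  apply (seg_dist _ _ _ d N); auto. apply Rabs_pos.
Qed.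

Lemma omega2_lam d x s y : 0 < d -> 0 <= x -> 0 <= s -> 0 <= y ->
  Rabs (f x s - f x y) <= omega2 f d + omega2 f d / d ^ 2 * (s - y)^2.
Proof.
  intros Hd Hx Hs Hy.
  rewrite <- (pow2_abs (s - y)). apply lam_bound; [apply Rabs_pos|auto|apply omega2_ge0; lra|].
  intros N HN.
  set (g tau := f x (s + tau * (y - s))).
  assert (G0 : g 0 = f x s) by (unfold g; f_equal; ring).
  assert (G1 : g 1 = f x y) by (unfold g; f_equal; ring).
  rewrite <- G0, <- G1. apply chain.
  intros tau tau' [H1 H2] [H3 H4] H5. unfold g. apply omega2_ub; try nra.
  replace (s + tau * (y - s) - (s + tau' * (y - s))) with ((tau - tau') * (y - s)) by ring.
  rewrite Rabs_mult, (Rabs_minus_sym y s).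
  apply (seg_dist _ _ _ d N); auto. apply Rabs_pos.
Qed.
End Om.

Lemma aroot_gt1 a m : 1 < a -> (1 <= m)%nat -> 1 < aroot a m.
Proof.
  intros Ha Hm. unfold aroot, Rpower. rewrite <- exp_0. apply exp_increasing.
  apply Rmult_lt_0_compat. apply Rinv_0_lt_compat, lt_0_INR; lia.
  rewrite <- ln_1. apply ln_increasing; lra.
Qed.

Lemma ln_pos a : 1 < a -> 0 < ln a.
Proof. intros. rewrite <- ln_1. apply ln_increasing; lra. Qed.

Definition uu a m x := x * ln a / (aroot a m - 1).

Lemma kernel_eq a m n k1 k2 x y : 1 < a -> (1 <= m)%nat -> (1 <= n)%nat ->
  s_kernel a m n k1 k2 x y = pw (uu a m x) k1 * pw (uu a n y) k2.
Proof.
  intros Ha Hm Hn. pose proof (aroot_gt1 a m Ha Hm). pose proof (aroot_gt1 a n Ha Hn).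
  unfold s_kernel, pw, ek, uu, Rpower.
  replace (- (x / (aroot a m - 1)) * ln a) with (- (x * ln a / (aroot a m - 1))) by (field; lra).
  replace (- (y / (aroot a n - 1)) * ln a) with (- (y * ln a / (aroot a n - 1))) by (field; lra).
  unfold Rdiv. rewrite !Rpow_mult_distr, !pow_inv, pow_add.
  assert (aroot a m - 1 <> 0) by lra. assert (aroot a n - 1 <> 0) by lra.
  pose proof (pow_nonzero _ k1 H1). pose proof (pow_nonzero _ k2 H2).
  pose proof (INR_fact_neq_0 k1). pose proof (INR_fact_neq_0 k2).
  field. tauto.
Qed.

Lemma delta_eq a m x : 1 < a -> (1 <= m)%nat -> 0 <= x ->
  delta a m x ^ 2 = (uu a m x / INR m - x) ^ 2 + uu a m x / INR m ^ 2.
Proof.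
  intros Ha Hm Hx. pose proof (aroot_gt1 a m Ha Hm).
  assert (INR m <> 0) by (apply not_0_INR; lia).
  assert (E : x * (INR m ^ 2 * x * (aroot a m - 1) ^ 2
             - (aroot a m - 1) * ln a * (2 * INR m * x - 1)
             + x * (ln a) ^ 2)
        / (INR m ^ 2 * (aroot a m - 1) ^ 2) = (uu a m x / INR m - x) ^ 2 + uu a m x / INR m ^ 2).
  { unfold uu. field. split; lra. }
  unfold delta. rewrite E. apply pow2_sqrt.
  apply Rplus_le_le_0_compat. apply pow2_ge_0.
  unfold uu. apply Rmult_le_pos. apply Rmult_le_pos. apply Rmult_le_pos; auto.
  left; apply ln_pos; auto. left; apply Rinv_0_lt_compat; lra.
  left; apply Rinv_0_lt_compat. apply pow_lt. apply lt_0_INR; lia.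
Qed.

Lemma uu_ge0 a m x : 1 < a -> (1 <= m)%nat -> 0 <= x -> 0 <= uu a m x.
Proof.
  intros Ha Hm Hx. pose proof (aroot_gt1 a m Ha Hm). pose proof (ln_pos a Ha).
  unfold uu. apply Rmult_le_pos. apply Rmult_le_pos; lra. left; apply Rinv_0_lt_compat; lra.
Qed.

Lemma delta_pos a m x : 1 < a -> (1 <= m)%nat -> 0 < x -> 0 < delta a m x ^ 2.
Proof.
  intros Ha Hm Hx. rewrite delta_eq; auto; try lra.
  pose proof (aroot_gt1 a m Ha Hm). pose proof (ln_pos a Ha).
  assert (0 < uu a m x).
  { unfold uu. apply Rmult_lt_0_compat. apply Rmult_lt_0_compat; lra. apply Rinv_0_lt_compat; lra. }
  assert (0 < INR m ^ 2) by (apply pow_lt, lt_0_INR; lia).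
  pose proof (pow2_ge_0 (uu a m x / INR m - x)).
  assert (0 < uu a m x / INR m ^ 2) by (apply Rdiv_lt_0_compat; auto). lra.
Qed.

Lemma moment a m x : 1 < a -> (1 <= m)%nat -> 0 <= x ->
  is_series (fun k => pw (uu a m x) k * (INR k / INR m - x) ^ 2) (delta a m x ^ 2).
Proof.
  intros Ha Hm Hx. rewrite delta_eq; auto. apply pw_moment. apply not_0_INR; lia.
Qed.

Lemma zero_case a m x k : 1 < a -> x = 0 -> pw (uu a m x) k <> 0 -> INR k / INR m = x.
Proof.
  intros Ha Hx Hp. replace (uu a m x) with 0 in Hp by (unfold uu; rewrite Hx; unfold Rdiv; ring).
  apply pw_zero in Hp. subst. simpl. unfold Rdiv. ring.
Qed.

Lemma div_sq_le W d : 0 <= W -> W / d * d <= W.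
Proof.
  intros HW. destruct (Req_dec d 0) as [E|E]. rewrite E. rewrite Rmult_0_r. auto.
  right. field. auto.
Qed.

Theorem mainTheorem3 (a : R) (f : R -> R -> R) :
  1 < a -> continuous_on_X f -> bounded_on_X f ->
  forall (m n : nat) (x y : R), (1 <= m)%nat -> (1 <= n)%nat -> inX x y ->
    Rabs (Yhat a m n f x y - f x y) <= 2 * omega f (delta2 a m n x y) /\
    Rabs (Yhat a m n f x y - f x y) <=
      2 * (omega1 f (delta a m x) + omega2 f (delta a n y)).
Proof.
  intros Ha _ [M HM] m n x y Hm Hn [Hx Hy].
  assert (HY : Yhat a m n f x y = Series (fun k1 => pw (uu a m x) k1 *
      Series (fun k2 => pw (uu a n y) k2 * f (INR k1 / INR m) (INR k2 / INR n)))).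
  { unfold Yhat. apply Series_ext. intros k1. rewrite <- Series_scal_l. apply Series_ext. intros k2.
    rewrite kernel_eq by auto. ring. }
  rewrite HY.
  assert (Hp : forall k, 0 <= pw (uu a m x) k) by (intros; apply pw_ge0, uu_ge0; auto).
  assert (Hq : forall k, 0 <= pw (uu a n y) k) by (intros; apply pw_ge0, uu_ge0; auto).
  assert (HF : forall k1 k2, Rabs (f (INR k1 / INR m) (INR k2 / INR n)) <= M).
  { intros. apply HM. split; apply Rmult_le_pos; try apply pos_INR; left; apply Rinv_0_lt_compat, lt_0_INR; lia. }
  assert (HT : forall k, 0 <= INR k / INR m).
  { intros. apply Rmult_le_pos; try apply pos_INR; left; apply Rinv_0_lt_compat, lt_0_INR; lia. }
  assert (HS : forall k, 0 <= INR k / INR n).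
  { intros. apply Rmult_le_pos; try apply pos_INR; left; apply Rinv_0_lt_compat, lt_0_INR; lia. }
  pose proof (moment a m x Ha Hm Hx) as SD1.
  pose proof (moment a n y Ha Hn Hy) as SD2.
  pose proof (pw_series (uu a m x)) as Sp. pose proof (pw_series (uu a n y)) as Sq.
  assert (Hd2 : delta2 a m n x y ^ 2 = delta a m x ^ 2 + delta a n y ^ 2).
  { unfold delta2. apply pow2_sqrt. apply Rplus_le_le_0_compat; apply pow2_ge_0. }
  split.
  - set (d := delta2 a m n x y). set (W := omega f d).
    assert (HW : 0 <= W) by (apply (omega_ge0 f M HM); apply sqrt_pos).
    eapply Rle_trans.
    + apply (double_bound _ _ _ (fun k => INR k / INR m) (fun k => INR k / INR n) x y _ W (W / d ^ 2) (W / d ^ 2) _ _ M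
        Hp Hq Sp Sq SD1 SD2 HF).
      intros k1 k2 Hk1 Hk2.
      destruct (Rle_lt_or_eq_dec 0 d (sqrt_pos _)) as [Hdp|Hd0].
      * eapply Rle_trans. apply (omega_lam f M HM d); auto; split; auto.
        fold W. right. ring.
      * destruct (Rle_lt_or_eq_dec 0 x Hx) as [Hx'|Hx'].
        { exfalso. pose proof (delta_pos a m x Ha Hm Hx'). pose proof (pow2_ge_0 (delta a n y)).
          assert (d ^ 2 = 0) by (rewrite <- Hd0; ring). fold d in Hd2. lra. }
        destruct (Rle_lt_or_eq_dec 0 y Hy) as [Hy'|Hy'].
        { exfalso. pose proof (delta_pos a n y Ha Hn Hy'). pose proof (pow2_ge_0 (delta a m x)).
          assert (d ^ 2 = 0) by (rewrite <- Hd0; ring). fold d in Hd2. lra. }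
        rewrite (zero_case a m x k1 Ha (eq_sym Hx') Hk1), (zero_case a n y k2 Ha (eq_sym Hy') Hk2).
        unfold Rminus. rewrite Rplus_opp_r, Rabs_R0. simpl. nra.
    + replace (W + W / d ^ 2 * delta a m x ^ 2 + W / d ^ 2 * delta a n y ^ 2)
        with (W + W / d ^ 2 * d ^ 2) by (fold d in Hd2; rewrite Hd2; ring).
      pose proof (div_sq_le W (d ^ 2) HW). lra.
  - set (d1 := delta a m x). set (d2 := delta a n y).
    set (W1 := omega1 f d1). set (W2 := omega2 f d2).
    assert (HW1 : 0 <= W1) by (apply (omega1_ge0 f M HM); apply sqrt_pos).
    assert (HW2 : 0 <= W2) by (apply (omega2_ge0 f M HM); apply sqrt_pos).
    eapply Rle_trans.
    + apply (double_bound _ _ _ (fun k => INR k / INR m) (fun k => INR k / INR n) x y _ (W1 + W2) (W1 / d1 ^ 2) (W2 / d2 ^ 2) _ _ M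
        Hp Hq Sp Sq SD1 SD2 HF).
      intros k1 k2 Hk1 Hk2.
      set (t := INR k1 / INR m). set (s := INR k2 / INR n).
      replace (f t s - f x y) with ((f t s - f x s) + (f x s - f x y)) by ring.
      eapply Rle_trans. apply Rabs_triang.
      assert (B1 : Rabs (f t s - f x s) <= W1 + W1 / d1 ^ 2 * (t - x) ^ 2).
      { destruct (Rle_lt_or_eq_dec 0 x Hx) as [Hx'|Hx'].
        - assert (0 < d1).
          { pose proof (delta_pos a m x Ha Hm Hx') as H. fold d1 in H.
            destruct (Rle_lt_or_eq_dec 0 d1 (sqrt_pos _)) as [|E]; auto. rewrite <- E in H. simpl in H. lra. }
          apply (omega1_lam f M HM); auto. apply HT. apply HS.
        - unfold t. rewrite (zero_case a m x k1 Ha (eq_sym Hx') Hk1).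
          unfold Rminus. rewrite Rplus_opp_r, Rabs_R0. simpl. nra. }
      assert (B2 : Rabs (f x s - f x y) <= W2 + W2 / d2 ^ 2 * (s - y) ^ 2).
      { destruct (Rle_lt_or_eq_dec 0 y Hy) as [Hy'|Hy'].
        - assert (0 < d2).
          { pose proof (delta_pos a n y Ha Hn Hy') as H. fold d2 in H.
            destruct (Rle_lt_or_eq_dec 0 d2 (sqrt_pos _)) as [|E]; auto. rewrite <- E in H. simpl in H. lra. }
          apply (omega2_lam f M HM); auto. apply HS.
        - unfold s. rewrite (zero_case a n y k2 Ha (eq_sym Hy') Hk2).
          unfold Rminus. rewrite Rplus_opp_r, Rabs_R0. simpl. nra. }
      lra.
    + pose proof (div_sq_le W1 (d1 ^ 2) HW1). pose proof (div_sq_le W2 (d2 ^ 2) HW2). fold d1 d2. lra.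
Qed.
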